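(* Let $d\ge1$, $\kappa\ge1$, $\theta>0$ and $\eta\in\mathbb R$, and for $i\ge2$ let $N_i=\lfloor i^\kappa(\log i)^\eta\rfloor$. Then $$\sum_{i=2}^\infty\ \sum_{\{\mathbf n\in\mathbb Z_+^d:\ |\mathbf n|=N_i\}}\frac1{|\mathbf n|^\theta}=\sum_{i=2}^\infty\frac{d(N_i)}{N_i^{\theta}}\ \begin{cases}<\infty,&\theta>1/\kappa,\\=\infty,&\theta<1/\kappa.\end{cases}$$
   Context: $\mathbb Z_+^d$ is the set of $d$-tuples of positive integers; $|\mathbf n|=\prod_{k=1}^d n_k$. For a positive integer $j$, $d(j)=\operatorname{Card}\{\mathbf k\in\mathbb Z_+^d:|\mathbf k|=j\}$ (terms with $N_i=0$, which occur for at most finitely many $i$, are omitted). *)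

(* Defs.v *)
From Stdlib Require Import Reals Lra Lia List Arith ZArith.
Import ListNotations.
Open Scope R_scope.

(* |n| = product of the entries of a tuple n (a list of naturals). *)
Definition nprod (k : list nat) : nat := fold_right Nat.mul 1%nat k.

Fixpoint tuples (d j : nat) : list (list nat) :=
  match d with
  | O => [[]]
  | S d' => flat_map (fun x => map (cons x) (tuples d' j)) (seq 1 j)
  end.

(* The (duplicate-free) enumeration of {k in Z_+^d : |k| = j}.
   Any k in Z_+^d with |k| = j >= 1 has all entries in {1,...,j}. *)
Definition level_set (d j : nat) : list (list nat) :=
  filter (fun k => Nat.eqb (nprod k) j) (tuples d j).

Definition dcount (d j : nat) : nat := length (level_set d j).

Definition Nseq (kappa eta : R) (i : nat) : nat :=
  Z.to_nat (Int_part (Rpower (INR i) kappa * Rpower (ln (INR i)) eta)).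

Definition inner_sum (d : nat) (theta : R) (j : nat) : R :=
  fold_right Rplus 0 (map (fun k => / Rpower (INR (nprod k)) theta) (level_set d j)).

(* i-th term d(N_i)/N_i^theta, omitted (= 0) when N_i = 0. *)
Definition term (d : nat) (kappa eta theta : R) (i : nat) : R :=
  let N := Nseq kappa eta i in
  if Nat.eqb N 0 then 0 else INR (dcount d N) / Rpower (INR N) theta.

(* partial sums  sum_{i=2}^{n+2} term i *)
Definition psum (d : nat) (kappa eta theta : R) (n : nat) : R :=
  sum_f_R0 (fun k => term d kappa eta theta (k + 2)) n.

(* Main.v *)
Require Import Defs.
From Stdlib Require Import Reals Lra Lia List Arith ZArith.

Module NT.
From mathcomp Require Import all_boot.
Set Warnings "-notation-overridden".
Local Open Scope nat_scope.

Lemma elem1 K e : 0 < K -> e.+1 ^ K <= K ^ K * 2 ^ e.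
Proof.
move=> K0.
set q := e %/ K.
have h1 : e.+1 <= K * (q.+1).
  rewrite mulnS {1}(divn_eq e K) -/q mulnC addnC -addSn leq_add2r.
  by rewrite ltn_mod.
have h2 : q.+1 <= 2 ^ q by apply: ltn_expl.
have h3 : q * K <= e by rewrite /q leq_trunc_div.
apply: (leq_trans (n := (K * 2 ^ q) ^ K)).
  by rewrite leq_exp2r // (leq_trans h1) // leq_mul2l h2 orbT.
by rewrite expnMn leq_mul2l -expnM leq_pexp2l // orbT.
Qed.

Lemma elem2 K e p : 2 ^ K <= p -> e.+1 ^ K <= p ^ e.
Proof.
move=> hp.
apply: (leq_trans (n := (2 ^ e) ^ K)).
  case: K hp => [|K] hp; first by rewrite !expn0.
  by rewrite leq_exp2r // ltn_expl.
rewrite -expnM mulnC expnM.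
case: e => [|e]; first by rewrite !expn0.
by rewrite leq_exp2r.
Qed.

Definition pe (L : seq (nat * nat)) := foldr (fun f a => f.1 ^ f.2 * a) 1 L.
Definition se (L : seq (nat * nat)) := foldr (fun f a => f.2.+1 * a) 1 L.

Lemma step K L : 0 < K -> all (fun f => 1 < f.1) L ->
  se L ^ K <= (K ^ K) ^ (count (fun p => p < 2 ^ K) (unzip1 L)) * pe L.
Proof.
move=> K0; elim: L => [|[p e] L IH] /=; first by rewrite exp1n.
move=> /andP [p1 hL]; have {}IH := IH hL.
rewrite expnMn.
case: ltnP => hp /=.
  rewrite expnS -mulnA [_ ^ _ * (p ^ e * _)]mulnCA mulnA.
  apply: leq_mul => //.
  apply: (leq_trans (@elem1 K e K0)); rewrite leq_mul2l; apply/orP; right.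
  case: (e) => [|e']; first by rewrite !expn0.
  by rewrite leq_exp2r.
rewrite add0n mulnCA; apply: leq_mul => //.
exact: elem2.
Qed.

Lemma size_div n : 0 < n -> size (divisors n) = se (prime_decomp n).
Proof.
move=> _; rewrite /divisors.
elim: (prime_decomp n) => [|[p e] L IH] //=.
rewrite -IH; move: (foldr _ _ L) => divs.
elim: e => [|e IHe] /=; first by rewrite mul1n.
by rewrite (size_merge leq) size_cat size_map IHe mulSn addnC.
Qed.

Lemma pe_n n : 0 < n -> pe (prime_decomp n) = n.
Proof.
move=> n0; rewrite [RHS](prod_prime_decomp n0).
by elim: (prime_decomp n) => [|f L IH]; rewrite ?big_nil ?big_cons //= IH.
Qed.

Lemma key K n : 0 < K -> 0 < n -> size (divisors n) ^ K <= K ^ (K * 2 ^ K) * n.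
Proof.
move=> K0 n0.
have hall : all (fun f => 1 < f.1) (prime_decomp n).
  apply/allP => f hf.
  have : f.1 \in primes n by rewrite /primes; apply: map_f.
  by rewrite mem_primes => /andP [/prime_gt1 ->].
rewrite size_div //.
apply: (leq_trans (@step K _ K0 hall)); rewrite pe_n //.
rewrite leq_mul2r; apply/orP; right.
rewrite expnM leq_pexp2l ?expn_gt0 ?K0 //.
rewrite -size_filter -[X in _ <= X](size_iota 0); apply: uniq_leq_size.
  by rewrite filter_uniq // primes_uniq.
by move=> x; rewrite mem_filter mem_iota add0n => /andP [-> _].
Qed.

Definition divs n := divisors n.

Lemma natpow a b : Nat.pow a b = a ^ b.
Proof. by elim: b => [|b IH] //=; rewrite expnS IH. Qed.

Lemma key' K n : (1 <= K)%coq_nat -> (1 <= n)%coq_nat ->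
  (Nat.pow (length (divs n)) K <= Nat.mul (Nat.pow K (Nat.mul K (Nat.pow 2 K))) n)%coq_nat.
Proof.
move=> /leP K0 /leP n0; apply/leP.
rewrite !natpow.
have -> : length (divisors n) = size (divisors n).
  by elim: (divisors n) => //= a s ->.
exact: key.
Qed.

Lemma In_div x n : (1 <= n)%coq_nat -> Nat.divide x n -> List.In x (divs n).
Proof.
move=> /leP n0 [z hz]; rewrite /divs.
have : x \in divisors n.
  by rewrite -dvdn_divisors //; apply/dvdnP; exists z.
elim: (divisors n) => [|a s IH] //=.
by rewrite in_cons => /orP [/eqP ->|/IH]; [left|right].
Qed.
End NT.

From Stdlib Require Import Reals Lra Lia List Arith ZArith.
Import ListNotations.
Open Scope nat_scope.

Lemma nprod_div x k : In x k -> Nat.divide x (nprod k).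
Proof.
  induction k as [|a k IH]; simpl; [tauto|].
  intros [->|H].
  - exists (nprod k). lia.
  - destruct (IH H) as [z Hz]. exists (a*z). rewrite Hz. lia.
Qed.

Lemma filter_mono {A} (f g : A -> bool) l :
  (forall x, In x l -> f x = true -> g x = true) ->
  (length (filter f l) <= length (filter g l))%nat.
Proof.
  induction l as [|a l IH]; simpl; intros H; [lia|].
  assert (IH' : (length (filter f l) <= length (filter g l))%nat) by (apply IH; auto).
  destruct (f a) eqn:Ef.
  - rewrite (H a (or_introl eq_refl) Ef). simpl. lia.
  - destruct (g a); simpl; lia.
Qed.

Lemma filter_flat_map {A B} (Q : B -> bool) (F : A -> list B) l :
  filter Q (flat_map F l) = flat_map (fun x => filter Q (F x)) l.
Proof.
  induction l as [|a l IH]; simpl; auto. rewrite filter_app, IH; auto.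
Qed.

Section Div.
Variable N : nat.
Definition bd (x : nat) : bool := existsb (Nat.eqb x) (NT.divs N).
Definition Qd (k : list nat) : bool := forallb bd k.

Lemma filter_cons_map x T :
  filter Qd (map (cons x) T) = if bd x then map (cons x) (filter Qd T) else [].
Proof.
  induction T as [|a T IH]; simpl.
  - destruct (bd x); auto.
  - unfold Qd at 1. simpl. fold (Qd a). destruct (bd x); simpl.
    + destruct (Qd a); simpl; rewrite IH; auto.
    + exact IH.
Qed.

Lemma len_flat x_l T :
  length (flat_map (fun x => if bd x then map (cons x) T else []) x_l)
  = (length (filter bd x_l) * length T)%nat.
Proof.
  induction x_l as [|a l IH]; simpl; auto.
  rewrite length_app, IH. destruct (bd a); simpl; [rewrite length_map|]; lia.
Qed.

Lemma len_Q d : length (filter Qd (tuples d N)) = Nat.pow (length (filter bd (seq 1 N))) d.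
Proof.
  induction d as [|d IH]; simpl; auto.
  rewrite filter_flat_map.
  erewrite flat_map_ext by (intro; apply filter_cons_map).
  rewrite len_flat, IH. lia.
Qed.

Lemma len_bd : (1 <= N)%nat -> (length (filter bd (seq 1 N)) <= length (NT.divs N))%nat.
Proof.
  intros HN. apply NoDup_incl_length.
  - apply NoDup_filter, seq_NoDup.
  - intros x Hx. apply filter_In in Hx. destruct Hx as [_ Hx].
    unfold bd in Hx. apply existsb_exists in Hx. destruct Hx as [y [Hy Hxy]].
    apply Nat.eqb_eq in Hxy. subst; auto.
Qed.
End Div.

Lemma dcount_le d N : (1 <= N)%nat ->
  (dcount d N <= Nat.pow (length (NT.divs N)) d)%nat.
Proof.
  intros HN. unfold dcount, level_set.
  eapply Nat.le_trans; [apply (filter_mono _ (Qd N))|].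
  - intros k _ Hk. apply Nat.eqb_eq in Hk. unfold Qd. apply forallb_forall.
    intros x Hx. unfold bd. apply existsb_exists. exists x. split; [|apply Nat.eqb_refl].
    apply NT.In_div; auto. rewrite <- Hk. apply nprod_div; auto.
  - rewrite len_Q. apply Nat.pow_le_mono_l. apply len_bd; auto.
Qed.

Lemma in_tuples_cons x k m N : In x (seq 1 N) -> In k (tuples m N) -> In (x :: k) (tuples (S m) N).
Proof.
  intros Hx Hk. simpl. apply in_flat_map. exists x. split; auto. apply in_map; auto.
Qed.

Lemma repeat_in m N : (1 <= N)%nat -> In (repeat 1%nat m) (tuples m N).
Proof.
  intros HN. induction m as [|m IH]; simpl; auto.
  apply (in_tuples_cons 1 (repeat 1%nat m) m N); auto. apply in_seq. lia.
Qed.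

Lemma nprod_repeat m : nprod (repeat 1%nat m) = 1%nat.
Proof. induction m; simpl; auto. rewrite IHm. auto. Qed.

Lemma dcount_pos d N : (1 <= d)%nat -> (1 <= N)%nat -> (1 <= dcount d N)%nat.
Proof.
  intros Hd HN. destruct d as [|d]; [lia|].
  assert (H : In (N :: repeat 1%nat d) (level_set (S d) N)).
  { unfold level_set. apply filter_In. split.
    - apply in_tuples_cons. apply in_seq; lia. apply repeat_in; auto.
    - apply Nat.eqb_eq. simpl. rewrite nprod_repeat. lia. }
  unfold dcount. destruct (level_set (S d) N); simpl in *; [tauto|lia].
Qed.
Open Scope R_scope.

Lemma exp_mono x y : x <= y -> exp x <= exp y.
Proof. intros [H|H]; [left; apply exp_increasing; auto | subst; lra]. Qed.

Lemma ln_mono x y : 0 < x -> x <= y -> ln x <= ln y.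
Proof. intros Hx [H|H]; [left; apply ln_increasing; auto | subst; lra]. Qed.

Lemma ln_le_sub1 y : 0 < y -> ln y <= y - 1.
Proof. intros Hy. pose proof (exp_ineq1_le (ln y)). rewrite exp_ln in H; lra. Qed.

Lemma Rpower_pos x y : 0 < Rpower x y.
Proof. apply exp_pos. Qed.

Lemma ln_ge1 x : 3 <= x -> 1 <= ln x.
Proof.
  intros Hx. rewrite <- (ln_exp 1). apply ln_mono. apply exp_pos.
  pose proof exp_le_3; lra.
Qed.

Lemma ln_div_le x : 0 < x -> ln (x + 1) - ln x <= / x.
Proof.
  intros Hx. replace (ln (x+1) - ln x) with (ln ((x+1) * / x)).
  - assert (H := ln_le_sub1 ((x+1) * / x)).
    assert (H0 : 0 < (x + 1) * / x) by (apply Rmult_lt_0_compat; [lra| apply Rinv_0_lt_compat; lra]).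
    specialize (H H0). replace ((x + 1) * / x - 1) with (/ x) in H; [lra| field; lra].
  - rewrite ln_mult, ln_Rinv; try lra. apply Rinv_0_lt_compat; lra.
Qed.

Lemma logpow_upper beta mu : 0 < mu ->
  exists C, 0 < C /\ forall x, 3 <= x -> Rpower (ln x) beta <= C * Rpower x mu.
Proof.
  intros Hmu. destruct (Rle_or_lt beta 0) as [Hb|Hb].
  - exists 1. split; [lra|]. intros x Hx.
    assert (H1 := ln_ge1 x Hx).
    assert (H2 : 0 <= ln (ln x)) by (rewrite <- ln_1; apply ln_mono; lra).
    assert (H3 : 0 <= ln x) by lra.
    unfold Rpower. rewrite Rmult_1_l.
    apply exp_mono. apply Rle_trans with 0.
    + nra.
    + apply Rmult_le_pos; lra.
  - set (al := mu / beta).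
    assert (Hal : 0 < al) by (unfold al; apply Rdiv_lt_0_compat; lra).
    exists (exp (- beta * ln al)). split; [apply exp_pos|].
    intros x Hx. assert (H1 := ln_ge1 x Hx).
    assert (Hy : ln x <= Rpower x al / al).
    { assert (H := ln_le_sub1 (Rpower x al) (Rpower_pos _ _)).
      rewrite ln_Rpower in H. apply Rmult_le_reg_l with al; auto.
      field_simplify; try lra. }
    assert (Hl : ln (ln x) <= al * ln x - ln al).
    { eapply Rle_trans; [apply ln_mono; [lra|exact Hy]|].
      unfold Rdiv. rewrite ln_mult, ln_Rinv, ln_Rpower; try lra.
      apply Rpower_pos. apply Rinv_0_lt_compat; auto. }
    unfold Rpower at 1 2. rewrite <- exp_plus. apply exp_mono.
    apply Rmult_le_compat_l with (r := beta) in Hl; [|lra].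
    rewrite Rmult_minus_distr_l in Hl.
    replace (beta * (al * ln x)) with (mu * ln x) in Hl; [lra|].
    unfold al; field; lra.
Qed.

Lemma logpow_lower beta mu : 0 < mu ->
  exists c, 0 < c /\ forall x, 3 <= x -> c * Rpower x (- mu) <= Rpower (ln x) beta.
Proof.
  intros Hmu. destruct (logpow_upper (- beta) mu Hmu) as [C [HC H]].
  exists (/ C). split; [apply Rinv_0_lt_compat; auto|]. intros x Hx.
  assert (E1 : Rpower (ln x) beta = / Rpower (ln x) (- beta)).
  { rewrite Rpower_Ropp, Rinv_inv; auto. }
  rewrite E1, Rpower_Ropp, <- Rinv_mult. apply Rinv_le_contravar; auto.
  apply Rpower_pos.
Qed.

Lemma Rpower_anti e a b : e <= 0 -> 0 < a -> a <= b -> Rpower b e <= Rpower a e.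
Proof.
  intros He Ha Hab. unfold Rpower. apply exp_mono.
  assert (ln a <= ln b) by (apply ln_mono; auto).
  apply Rmult_le_compat_neg_l; auto.
Qed.

Lemma telescope x s : 2 <= x -> 1 < s ->
  (s - 1) * Rpower x (- s) <= Rpower (x - 1) (1 - s) - Rpower x (1 - s).
Proof.
  intros Hx Hs.
  set (L := ln x). set (L' := ln (x - 1)).
  assert (HLL : L' - L <= - / x).
  { unfold L, L'. replace (ln (x - 1) - ln x) with (ln ((x - 1) * / x)).
    - assert (H0 : 0 < (x - 1) * / x) by (apply Rmult_lt_0_compat; [lra| apply Rinv_0_lt_compat; lra]).
      assert (H := ln_le_sub1 _ H0).
      replace ((x - 1) * / x - 1) with (- / x) in H; [lra| field; lra].
    - rewrite ln_mult, ln_Rinv; try lra. apply Rinv_0_lt_compat; lra. }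
  unfold Rpower. fold L L'.
  replace ((1 - s) * L') with ((1 - s) * L + (1 - s) * (L' - L)) by ring.
  rewrite exp_plus.
  assert (H1 := exp_ineq1_le ((1 - s) * (L' - L))).
  assert (H2 : (s - 1) * / x <= (1 - s) * (L' - L)).
  { replace ((1 - s) * (L' - L)) with ((s - 1) * (- (L' - L))) by ring.
    apply Rmult_le_compat_l; lra. }
  assert (H3 : exp (- s * L) = exp ((1 - s) * L) * / x).
  { replace (- s * L) with ((1 - s) * L + - L) by ring. rewrite exp_plus, exp_Ropp.
    unfold L. rewrite exp_ln; lra. }
  rewrite H3. assert (H4 := exp_pos ((1 - s) * L)).
  assert (exp ((1 - s) * L) * (1 + (s - 1) * / x) <= exp ((1 - s) * L) * exp ((1 - s) * (L' - L))).
  { apply Rmult_le_compat_l; lra. }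
  nra.
Qed.
Open Scope R_scope.

Definition fR (kappa eta : R) (i : nat) : R :=
  Rpower (INR i) kappa * Rpower (ln (INR i)) eta.

Lemma Nbounds kappa eta i : 0 < fR kappa eta i ->
  INR (Nseq kappa eta i) <= fR kappa eta i /\ fR kappa eta i - 1 < INR (Nseq kappa eta i).
Proof.
  intros Hf. unfold Nseq. fold (fR kappa eta i).
  destruct (base_Int_part (fR kappa eta i)) as [H1 H2].
  assert (H3 : (0 <= Int_part (fR kappa eta i))%Z).
  { assert (-1 < IZR (Int_part (fR kappa eta i))) by lra.
    apply lt_IZR in H. lia. }
  rewrite INR_IZR_INZ, Z2Nat.id by exact H3. lra.
Qed.

Lemma fR_pos kappa eta i : 0 < fR kappa eta i.
Proof. unfold fR. apply Rmult_lt_0_compat; apply Rpower_pos. Qed.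

Lemma f_lower kappa eta g : 0 < g ->
  exists c, 0 < c /\ forall i, (3 <= i)%nat -> c * Rpower (INR i) (kappa - g) <= fR kappa eta i.
Proof.
  intros Hg. destruct (logpow_lower eta g Hg) as [c [Hc H]].
  exists c. split; auto. intros i Hi.
  assert (Hx : 3 <= INR i) by (replace 3 with (INR 3) by (simpl; ring); apply le_INR; auto).
  specialize (H _ Hx). unfold fR.
  replace (kappa - g) with (kappa + - g) by ring. rewrite Rpower_plus.
  pose proof (Rpower_pos (INR i) kappa). nra.
Qed.

Lemma nat_root a b K : (Nat.pow a K <= b)%nat -> (1 <= K)%nat -> (1 <= b)%nat ->
  INR a <= Rpower (INR b) (/ INR K).
Proof.
  intros H HK Hb. destruct a as [|a].
  - simpl. left; apply Rpower_pos.
  - assert (HK' : 0 < INR K) by (apply lt_0_INR; lia).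
    assert (Ha : 0 < INR (S a)) by (apply lt_0_INR; lia).
    assert (H1 : INR K * ln (INR (S a)) <= ln (INR b)).
    { rewrite <- ln_pow by auto. apply ln_mono. apply pow_lt; auto.
      rewrite <- pow_INR. apply le_INR. auto. }
    unfold Rpower. rewrite <- (exp_ln (INR (S a))) at 1 by auto. apply exp_mono.
    apply Rmult_le_reg_l with (INR K); auto.
    rewrite <- Rmult_assoc, Rinv_r by lra. lra.
Qed.

Definition CK (K : nat) : nat := Nat.pow K (Nat.mul K (Nat.pow 2 K)).

Lemma dcount_real d K N : (1 <= K)%nat -> (1 <= N)%nat ->
  INR (dcount d N) <= Rpower (INR (CK K * N)) (/ INR K * INR d).
Proof.
  intros HK HN.
  assert (H1 := dcount_le d N HN).
  assert (H2 := NT.key' K N HK HN).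
  assert (HCK : (1 <= CK K * N)%nat).
  { unfold CK. assert (1 <= Nat.pow K (K * Nat.pow 2 K))%nat.
    { apply Nat.le_trans with (Nat.pow 1 (K * Nat.pow 2 K)). rewrite Nat.pow_1_l; lia.
      apply Nat.pow_le_mono_l; auto. }
    nia. }
  assert (H3 := nat_root _ _ _ H2 HK HCK).
  apply le_INR in H1. rewrite pow_INR in H1. eapply Rle_trans; [exact H1|].
  rewrite <- Rpower_mult, Rpower_pow by apply Rpower_pos.
  apply pow_incr. split; [apply pos_INR|]. exact H3.
Qed.

Lemma fold_const (c : R) (g : list nat -> R) (l : list (list nat)) :
  (forall k, In k l -> g k = c) -> fold_right Rplus 0 (map g l) = INR (length l) * c.
Proof.
  induction l as [|a l IH]; intros H; simpl; [ring|].
  rewrite IH by (intros; apply H; now right). rewrite H by now left.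
  destruct (length l); simpl; ring.
Qed.

Lemma inner_eq d theta N :
  inner_sum d theta N = INR (dcount d N) / Rpower (INR N) theta.
Proof.
  unfold inner_sum, dcount. rewrite (fold_const (/ Rpower (INR N) theta)); [reflexivity|].
  intros k Hk. unfold level_set in Hk. apply filter_In in Hk. destruct Hk as [_ Hk].
  apply Nat.eqb_eq in Hk. rewrite Hk. reflexivity.
Qed.
Open Scope R_scope.

Lemma large c p A : 0 < c -> 0 < p ->
  exists i0, (3 <= i0)%nat /\ forall i, (i0 <= i)%nat -> A <= c * Rpower (INR i) p.
Proof.
  intros Hc Hp. set (A' := Rmax A 1).
  assert (HA' : 0 < A' / c) by (unfold A'; apply Rdiv_lt_0_compat; auto; pose proof (Rmax_r A 1); lra).
  destruct (INR_unbounded (Rpower (A' / c) (/ p))) as [n Hn].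
  exists (Nat.max 3 n). split; [lia|]. intros i Hi.
  assert (H1 : INR n <= INR i) by (apply le_INR; lia).
  assert (H2 : A' / c <= Rpower (INR i) p).
  { replace (A' / c) with (Rpower (Rpower (A' / c) (/ p)) p).
    - apply Rle_Rpower_l; [lra|]. split; [apply Rpower_pos|lra].
    - rewrite Rpower_mult, Rinv_l, Rpower_1; auto; lra. }
  assert (A <= A') by (unfold A'; apply Rmax_l).
  apply Rmult_le_compat_l with (r := c) in H2; [|lra].
  replace (c * (A' / c)) with A' in H2 by (field; lra). lra.
Qed.

Lemma term_nonneg d kappa eta theta i : 0 <= term d kappa eta theta i.
Proof.
  unfold term. destruct (Nat.eqb _ 0); [lra|].
  unfold Rdiv. apply Rmult_le_pos; [apply pos_INR|]. left; apply Rinv_0_lt_compat, Rpower_pos.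
Qed.

Lemma term_eq d kappa eta theta i : Nseq kappa eta i <> 0%nat ->
  term d kappa eta theta i = INR (dcount d (Nseq kappa eta i)) / Rpower (INR (Nseq kappa eta i)) theta.
Proof.
  intros H. unfold term. destruct (Nat.eqb_spec (Nseq kappa eta i) 0); [contradiction|auto].
Qed.

Lemma psum_S d kappa eta theta n :
  psum d kappa eta theta (S n) = psum d kappa eta theta n + term d kappa eta theta (S n + 2).
Proof. reflexivity. Qed.

Lemma psum_mono d kappa eta theta n k :
  psum d kappa eta theta n <= psum d kappa eta theta (n + k).
Proof.
  induction k as [|k IH]. rewrite Nat.add_0_r; lra.
  rewrite Nat.add_succ_r, psum_S. pose proof (term_nonneg d kappa eta theta (S (n + k) + 2)). lra.
Qed.

Lemma INR_N_pos kappa eta i : 1 <= fR kappa eta i -> (1 <= Nseq kappa eta i)%nat.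
Proof.
  intros H. destruct (Nbounds kappa eta i (fR_pos _ _ _)) as [_ H2].
  destruct (Nseq kappa eta i) eqn:E; [simpl in H2; lra | lia].
Qed.
Open Scope R_scope.

Lemma conv_part d kappa eta theta : 1 <= kappa -> 0 < theta -> theta > 1 / kappa ->
  exists l, Un_cv (psum d kappa eta theta) l.
Proof.
  intros hk ht hth.
  assert (Hkt : 1 < kappa * theta).
  { apply Rmult_lt_compat_l with (r := kappa) in hth; [|lra].
    replace (kappa * (1 / kappa)) with 1 in hth by (field; lra). lra. }
  set (a := / (kappa * theta)).
  assert (Ha0 : 0 < a) by (unfold a; apply Rinv_0_lt_compat; lra).
  assert (Hak : a * (kappa * theta) = 1) by (unfold a; field; lra).
  assert (Ha1 : a < 1) by nra.
  set (lam := (1 + a) / 2).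
  assert (Hl0 : 0 < lam) by (unfold lam; lra).
  assert (Hl1 : lam < 1) by (unfold lam; lra).
  assert (Hll : lam * lam * (kappa * theta) > 1).
  { assert (lam * lam > a) by (unfold lam; nra). nra. }
  set (g := kappa * (1 - lam)).
  assert (Hg : 0 < g) by (unfold g; nra).
  destruct (f_lower kappa eta g Hg) as [c [Hc Hfl]].
  destruct (INR_unbounded (INR d / (theta * (1 - lam)))) as [n0 Hn0].
  set (K := S n0).
  assert (HK : (1 <= K)%nat) by (unfold K; lia).
  assert (HKr : 0 < INR K) by (apply lt_0_INR; lia).
  set (del := / INR K * INR d).
  assert (Hdel : del < theta * (1 - lam)).
  { assert (INR n0 < INR K) by (apply lt_INR; unfold K; lia).
    assert (H1 : INR d / (theta * (1 - lam)) < INR K) by lra.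
    assert (Htl : 0 < theta * (1 - lam)) by nra.
    apply Rmult_lt_compat_l with (r := theta * (1 - lam)) in H1; auto.
    replace (theta * (1 - lam) * (INR d / (theta * (1 - lam)))) with (INR d) in H1 by (field; lra).
    unfold del. apply Rmult_lt_reg_l with (INR K); auto.
    rewrite <- Rmult_assoc, Rinv_r by lra. lra. }
  assert (Hdel0 : 0 <= del) by (unfold del; apply Rmult_le_pos; [left; apply Rinv_0_lt_compat; auto| apply pos_INR]).
  assert (Hdt : del - theta <= 0) by nra.
  set (s := kappa * lam * (theta - del)).
  assert (Hs : 1 < s).
  { unfold s. assert (theta - del > theta * lam) by nra.
    assert (kappa * lam * (theta - del) >= kappa * lam * (theta * lam)).
    { apply Rle_ge, Rmult_le_compat_l; nra. }
    nra. }
  assert (Hkl : 0 < kappa * lam) by nra.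
  destruct (large c (kappa * lam) 2 Hc Hkl) as [i0 [Hi03 Hi0]].
  set (B := Rpower (INR (CK K)) del * Rpower (c / 2) (del - theta)).
  assert (HB : 0 < B) by (unfold B; apply Rmult_lt_0_compat; apply Rpower_pos).
  assert (Hterm : forall i, (i0 <= i)%nat -> term d kappa eta theta i <= B * Rpower (INR i) (- s)).
  { intros i Hi.
    assert (Hf1 := Hfl i ltac:(lia)).
    replace (kappa - g) with (kappa * lam) in Hf1 by (unfold g; ring).
    assert (Hf2 := Hi0 i Hi).
    destruct (Nbounds kappa eta i (fR_pos _ _ _)) as [HN1 HN2].
    assert (HN : (1 <= Nseq kappa eta i)%nat) by (apply INR_N_pos; lra).
    set (N := Nseq kappa eta i) in *.
    assert (HNr : 0 < INR N) by (apply lt_0_INR; lia).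
    assert (HNl : c / 2 * Rpower (INR i) (kappa * lam) <= INR N) by lra.
    rewrite term_eq by lia. fold N.
    assert (HCK : 0 < INR (CK K)).
    { apply lt_0_INR. unfold CK. apply Nat.neq_0_lt_0. apply Nat.pow_nonzero. lia. }
    eapply Rle_trans.
    { unfold Rdiv. apply Rmult_le_compat_r; [left; apply Rinv_0_lt_compat, Rpower_pos|].
      apply (dcount_real d K N HK HN). }
    fold del. rewrite mult_INR, <- Rpower_mult_distr by auto.
    rewrite Rmult_assoc. unfold B. rewrite Rmult_assoc. apply Rmult_le_compat_l; [left; apply Rpower_pos|].
    rewrite <- Rpower_Ropp, <- Rpower_plus.
    replace (del + - theta) with (del - theta) by ring.
    assert (Hpos : 0 < c / 2 * Rpower (INR i) (kappa * lam)) by (apply Rmult_lt_0_compat; [lra|apply Rpower_pos]).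
    eapply Rle_trans; [apply (Rpower_anti _ _ _ Hdt Hpos HNl)|].
    rewrite <- Rpower_mult_distr by (lra || apply Rpower_pos).
    rewrite Rpower_mult. apply Rmult_le_compat_l; [left; apply Rpower_pos|].
    unfold s. right. f_equal. ring. }
  set (m := i0).
  assert (Hsum : forall n, psum d kappa eta theta (m + n) <= psum d kappa eta theta m
     + B / (s - 1) * (Rpower (INR (m + 2)) (1 - s) - Rpower (INR (m + n + 2)) (1 - s))).
  { induction n as [|n IH].
    - rewrite Nat.add_0_r. lra.
    - rewrite Nat.add_succ_r, psum_S.
      assert (Ht := Hterm (S (m + n) + 2)%nat ltac:(unfold m; lia)).
      assert (Htel := telescope (INR (S (m + n) + 2)) s).
      replace (INR (S (m + n) + 2) - 1) with (INR (m + n + 2)) in Htel.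
      2:{ replace (S (m + n) + 2)%nat with (S (m + n + 2)) by lia. rewrite S_INR. ring. }
      assert (H2 : 2 <= INR (S (m + n) + 2)).
      { replace 2 with (INR 2) by (simpl; ring). apply le_INR. lia. }
      specialize (Htel H2 Hs).
      replace (S (m + n) + 2)%nat with (m + S n + 2)%nat in * by lia.
      assert (Hs1 : 0 < s - 1) by lra.
      assert (B * Rpower (INR (m + S n + 2)) (- s) <= B / (s - 1) *
         (Rpower (INR (m + n + 2)) (1 - s) - Rpower (INR (m + S n + 2)) (1 - s))).
      { unfold Rdiv. rewrite Rmult_assoc. apply Rmult_le_compat_l; [lra|].
        apply Rmult_le_reg_l with (s - 1); auto.
        rewrite <- Rmult_assoc, Rinv_r by lra. lra. }
      lra. }
  set (UB := psum d kappa eta theta m + B / (s - 1) * Rpower (INR (m + 2)) (1 - s)).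
  assert (Hub : forall n, psum d kappa eta theta n <= UB).
  { intros n. eapply Rle_trans; [apply (psum_mono _ _ _ _ n m)|].
    rewrite Nat.add_comm. eapply Rle_trans; [apply Hsum|].
    unfold UB. assert (0 < B / (s - 1)) by (apply Rdiv_lt_0_compat; lra).
    pose proof (Rpower_pos (INR (m + n + 2)) (1 - s)). nra. }
  destruct (growing_cv (psum d kappa eta theta)) as [l Hl].
  - intros n. rewrite psum_S. pose proof (term_nonneg d kappa eta theta (S n + 2)). lra.
  - exists UB. intros x [n ->]. apply Hub.
  - exists l. exact Hl.
Qed.
Open Scope R_scope.

Lemma div_part d kappa eta theta : (1 <= d)%nat -> 1 <= kappa -> 0 < theta -> theta < 1 / kappa ->
  cv_infty (psum d kappa eta theta).
Proof.
  intros hd hk ht hth.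
  assert (Hkt : kappa * theta < 1).
  { apply Rmult_lt_compat_l with (r := kappa) in hth; [|lra].
    replace (kappa * (1 / kappa)) with 1 in hth by (field; lra). lra. }
  set (mu := 1 - kappa * theta).
  assert (Hmu : 0 < mu) by (unfold mu; lra).
  destruct (logpow_upper (eta * theta) mu Hmu) as [C [HC Hup]].
  assert (Hk2 : 0 < kappa / 2) by lra.
  destruct (f_lower kappa eta (kappa / 2) Hk2) as [c [Hc Hfl]].
  destruct (large c (kappa - kappa / 2) 1 Hc ltac:(lra)) as [i0 [Hi03 Hi0]].
  assert (Hterm : forall i, (i0 <= i)%nat -> / C * / INR i <= term d kappa eta theta i).
  { intros i Hi.
    assert (Hf1 := Hfl i ltac:(lia)). assert (Hf2 := Hi0 i Hi).
    assert (Hf : 1 <= fR kappa eta i) by lra.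
    assert (HN := INR_N_pos _ _ _ Hf).
    destruct (Nbounds kappa eta i (fR_pos _ _ _)) as [HN1 HN2].
    set (N := Nseq kappa eta i) in *.
    assert (HNr : 0 < INR N) by (apply lt_0_INR; lia).
    assert (Hir : 3 <= INR i) by (replace 3 with (INR 3) by (simpl; ring); apply le_INR; lia).
    rewrite term_eq by lia. fold N.
    assert (Hd := dcount_pos d N hd HN). apply le_INR in Hd. simpl in Hd.
    assert (H1 : Rpower (INR N) theta <= Rpower (fR kappa eta i) theta).
    { apply Rle_Rpower_l; lra. }
    assert (H2 : Rpower (fR kappa eta i) theta <= C * INR i).
    { unfold fR. rewrite <- Rpower_mult_distr by apply Rpower_pos.
      rewrite !Rpower_mult.
      specialize (Hup (INR i) Hir).
      assert (Ei : Rpower (INR i) (kappa * theta) * Rpower (INR i) mu = INR i).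
      { rewrite <- Rpower_plus. unfold mu. replace (kappa * theta + (1 - kappa * theta)) with 1 by ring.
        apply Rpower_1. lra. }
      pose proof (Rpower_pos (INR i) (kappa * theta)).
      apply Rle_trans with (Rpower (INR i) (kappa * theta) * (C * Rpower (INR i) mu)).
      + apply Rmult_le_compat_l; lra.
      + right. transitivity (C * (Rpower (INR i) (kappa * theta) * Rpower (INR i) mu)); [ring|].
        rewrite Ei. reflexivity. }
    unfold Rdiv. rewrite <- Rinv_mult.
    apply Rle_trans with (1 * / Rpower (INR N) theta).
    - rewrite Rmult_1_l. apply Rinv_le_contravar; [apply Rpower_pos|lra].
    - apply Rmult_le_compat_r; [left; apply Rinv_0_lt_compat, Rpower_pos|lra]. }
  set (m := i0).
  assert (Hsum : forall n, psum d kappa eta theta m + / C * (ln (INR (m + n + 3)) - ln (INR (m + 3)))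
     <= psum d kappa eta theta (m + n)).
  { induction n as [|n IH].
    - rewrite !Nat.add_0_r. replace (ln (INR (m + 3)) - ln (INR (m + 3))) with 0 by ring. lra.
    - replace (m + S n)%nat with (S (m + n)) by lia. rewrite psum_S.
      assert (Ht := Hterm (S (m + n) + 2)%nat ltac:(unfold m; lia)).
      replace (S (m + n) + 2)%nat with (m + n + 3)%nat in Ht by lia.
      replace (S (m + n) + 2)%nat with (m + n + 3)%nat by lia.
      replace (S (m + n) + 3)%nat with (S (m + n + 3)) by lia.
      assert (Hx : 0 < INR (m + n + 3)) by (apply lt_0_INR; lia).
      assert (Hl := ln_div_le _ Hx). rewrite <- S_INR in Hl.
      assert (/ C * (ln (INR (S (m + n + 3))) - ln (INR (m + n + 3)))<= / C * / INR (m + n + 3)).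
      { apply Rmult_le_compat_l; [left; apply Rinv_0_lt_compat|]; lra. }
      lra. }
  intros M.
  set (T := (M - psum d kappa eta theta m) * C + ln (INR (m + 3))).
  destruct (INR_unbounded (exp T)) as [n0 Hn0].
  exists (m + n0)%nat. intros n Hn.
  replace n with (m + (n - m))%nat by lia.
  eapply Rlt_le_trans; [|apply Hsum].
  assert (HT : T < ln (INR (m + (n - m) + 3))).
  { rewrite <- (ln_exp T). apply ln_increasing; [apply exp_pos|].
    apply Rlt_le_trans with (INR n0); [lra|]. apply le_INR. lia. }
  unfold T in HT.
  assert (H : M - psum d kappa eta theta m < / C * (ln (INR (m + (n - m) + 3)) - ln (INR (m + 3)))).
  { apply Rmult_lt_reg_l with C; auto. rewrite <- Rmult_assoc, Rinv_r by lra. lra. }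
  lra.
Qed.

Theorem lemma3p3 (d : nat) (kappa theta eta : R)
  (hd : (1 <= d)%nat) (hk : 1 <= kappa) (ht : 0 < theta) :
  (forall i : nat, (2 <= i)%nat -> Nseq kappa eta i <> 0%nat ->
     inner_sum d theta (Nseq kappa eta i)
     = INR (dcount d (Nseq kappa eta i)) / Rpower (INR (Nseq kappa eta i)) theta) /\
  (theta > 1 / kappa -> exists l : R, Un_cv (psum d kappa eta theta) l) /\
  (theta < 1 / kappa -> cv_infty (psum d kappa eta theta)).
Proof.
  split; [|split].
  - intros i _ _. apply inner_eq.
  - intros H. apply conv_part; auto.
  - intros H. apply div_part; auto.
Qed.
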